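(* Let $1\le k\le d$ and let $p_0p_1\cdots p_k$ be a non-degenerate $k$-simplex in $\mathbb{R}^d$ with real values $\tau(p_0),\dots,\tau(p_k)$ such that $\tau(p_0)\le\tau(p_i)$ for all $i$. Let $\sigma>0$ with $\|\nabla\tau\|<\sigma$, and let $0<\varepsilon<1$. Let $F=p_1\cdots p_k$, let $\bar p_0$ be the orthogonal projection of $p_0$ onto $\operatorname{aff}(F)$, and $d_{p_0}:=|p_0\bar p_0|$. For $\delta\ge0$ let $\tau'_\delta$ be the affine function on $\operatorname{aff}(p_0\cdots p_k)$ with $\tau'_\delta(p_0)=\tau(p_0)+\delta$ and $\tau'_\delta(p_i)=\tau(p_i)$ for $i\ge1$. (1) If $\bar p_0\in F$ and $\|\nabla\tau|_F\|\le(1-\varepsilon)\sigma$, then $\|\nabla\tau'_\delta\|<\sigma$ for every $\delta\in[0,\varepsilon\, d_{p_0}\,\sigma]$. (2) If $\bar p_0\notin F$, let $u$ be the point of $F$ closest to $\bar p_0$; if $\|\nabla\tau|_F\|\le(1-\varepsilon)\,\sigma\,\sin\angle p_0u\bar p_0$, then $\|\nabla\tau'_\delta\|<\sigma$ for every $\delta\in[0,\varepsilon\, d_{p_0}\,\sigma]$.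
   Context: Given values at the vertices of a simplex, $\tau$ also denotes the affine interpolating function on the affine hull of the simplex, and $\nabla\tau$ its gradient within that affine hull (a vector parallel to the hull), with Euclidean norm $\|\cdot\|$. $\nabla\tau|_F$ is the gradient of the restriction of $\tau$ to $\operatorname{aff}(F)$ (zero if $F$ is a single point). $\operatorname{aff}$ denotes affine hull. *)

(* Defs.v *)
(* R : rcfType (real closed field; generalizes the reals), points in 'rV[R]_d. *)
From HB Require Import structures.
From mathcomp Require Import all_boot all_order all_algebra.
Set Implicit Arguments. Unset Strict Implicit. Unset Printing Implicit Defensive.
Import Order.TTheory GRing.Theory Num.Theory.
Local Open Scope ring_scope.

Definition dot (R : rcfType) (d : nat) (u v : 'rV[R]_d) : R := (u *m v^T) 0 0.
Definition norm (R : rcfType) (d : nat) (u : 'rV[R]_d) : R := Num.sqrt (dot u u).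

Definition aff_indep (R : rcfType) (d : nat) (I : finType) (q : I -> 'rV[R]_d) :=
  forall c : I -> R, \sum_i c i = 0 -> \sum_i c i *: q i = 0 -> forall i, c i = 0.

Definition in_aff (R : rcfType) (d : nat) (I : finType) (q : I -> 'rV[R]_d) (x : 'rV[R]_d) :=
  exists c : I -> R, \sum_i c i = 1 /\ x = \sum_i c i *: q i.

Definition in_conv (R : rcfType) (d : nat) (I : finType) (q : I -> 'rV[R]_d) (x : 'rV[R]_d) :=
  exists c : I -> R, (forall i, 0 <= c i) /\ \sum_i c i = 1 /\ x = \sum_i c i *: q i.

(* g is the gradient, within the affine hull of the q's, of the affine function
   interpolating the values t at the q's: g is parallel to the hull (a zero-sum
   combination of the points) and g . (q i - q j) = t i - t j. For a single point,
   g = 0. For affinely independent points it exists and is unique. *)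
Definition is_grad (R : rcfType) (d : nat) (I : finType) (q : I -> 'rV[R]_d) (t : I -> R)
  (g : 'rV[R]_d) :=
  (exists c : I -> R, \sum_i c i = 0 /\ g = \sum_i c i *: q i) /\
  (forall i j, dot g (q i - q j) = t i - t j).

Definition facet (T : Type) (k : nat) (p : 'I_k.+1 -> T) : 'I_k -> T :=
  fun j => p (lift ord0 j).

Definition raise0 (R : rcfType) (k : nat) (tau : 'I_k.+1 -> R) (delta : R) : 'I_k.+1 -> R :=
  fun i => if i == ord0 then tau ord0 + delta else tau i.

Definition cos_angle (R : rcfType) (d : nat) (a b c : 'rV[R]_d) : R :=
  dot (a - b) (c - b) / (norm (a - b) * norm (c - b)).
Definition sin_angle (R : rcfType) (d : nat) (a b c : 'rV[R]_d) : R :=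
  Num.sqrt (1 - cos_angle a b c ^+ 2).

(* Main.v *)
Require Import Defs.
From HB Require Import structures.
From mathcomp Require Import all_boot all_order all_algebra.
From Stdlib Require Import Ring FunctionalExtensionality.
Import Order.TTheory GRing.Theory Num.Theory.
Local Open Scope ring_scope.

Definition radd {R : rcfType} (x y : R) : R := x + y.
Definition rmul {R : rcfType} (x y : R) : R := x * y.
Definition ropp {R : rcfType} (x : R) : R := - x.
Definition rsub {R : rcfType} (x y : R) : R := x - y.
Definition r0 {R : rcfType} : R := 0.
Definition r1 {R : rcfType} : R := 1.
Lemma RTh (R : rcfType) : @ring_theory R r0 r1 radd rmul rsub ropp eq.
Proof. rewrite /r0 /r1 /radd /rmul /rsub /ropp.
split=> //; [exact: add0r|exact: addrC|exact: addrA|exact: mul1r|exact: mulrC|exact: mulrA|exact: mulrDl|exact: subrr]. Qed.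
Lemma raddE (R : rcfType) (x y : R) : x + y = radd x y. Proof. by []. Qed.
Lemma rmulE (R : rcfType) (x y : R) : x * y = rmul x y. Proof. by []. Qed.
Lemma roppE (R : rcfType) (x : R) : - x = ropp x. Proof. by []. Qed.
Lemma r0E (R : rcfType) : (0 : R) = r0. Proof. by []. Qed.
Lemma r1E (R : rcfType) : (1 : R) = r1. Proof. by []. Qed.
Lemma r2E (R : rcfType) : (2 : R) = 1 + 1. Proof. by []. Qed.
Ltac rring := rewrite ?expr2 ?exprS ?expr0 ?r2E ?raddE ?rmulE ?roppE ?r0E ?r1E;
  match goal with |- @eq _ ?a ?b => let T := type of a in change (@eq T a b) end; ring.

Section Reals.
Variable R : rcfType.
Add Ring RR : (RTh R).

Lemma sqle (a b : R) : 0 <= a -> a <= b -> a ^+ 2 <= b ^+ 2.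
Proof. move=> a0 ab; rewrite ler_pXn2r // nnegrE //; exact: le_trans ab. Qed.

Lemma pos1 (r dd x e s : R) : 0 < e -> e < 1 -> 0 < s -> 0 < dd -> 0 <= r ->
  r <= (1-e)*s -> 0 < x -> x <= e*dd*s -> r^+2 * dd^+2 + x^+2 < s^+2 * dd^+2.
Proof.
move=> e0 e1 s0 d0 r0 rle x0 xle.
have h1 : r^+2 <= ((1-e)*s)^+2 by apply: sqle.
have h2 : x^+2 <= (e*dd*s)^+2 by apply: sqle => //; exact: ltW.
apply: (le_lt_trans (lerD (ler_wpM2r (sqr_ge0 dd) h1) h2)).
rewrite -subr_gt0.
have -> : s^+2*dd^+2 - (((1-e)*s)^+2 * dd^+2 + (e*dd*s)^+2) = (1+1)*e*(1-e)*(s*dd)^+2 by rring.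
by rewrite !mulr_gt0 ?exprn_gt0 ?subr_gt0 ?addr_gt0 ?ltr01.
Qed.

Lemma pos2 (r dd x e s L D : R) : 0 < e -> e < 1 -> 0 < s -> 0 < dd -> 0 <= L -> L < D ->
  D^+2 = dd^+2 + L^+2 -> 0 <= r -> r*D <= (1-e)*s*dd -> 0 < x -> x <= r*L + e*dd*s ->
  r^+2*dd^+2 + x^+2 < s^+2*dd^+2.
Proof.
move=> e0 e1 s0 d0 L0 LD HD r0 rD x0 xle.
have D0 : 0 < D by exact: le_lt_trans LD.
rewrite -(ltr_pM2r (exprn_gt0 2 D0)).
have -> : (r^+2*dd^+2 + x^+2) * D^+2 = (r*D)^+2 * dd^+2 + (x*D)^+2 by rring.
set A := (1-e)*s*dd.
have h1 : x * D <= A * L + e*dd*s*D.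
  apply: (le_trans (ler_wpM2r (ltW D0) xle)).
  rewrite mulrDl lerD2r -mulrA (mulrC L) mulrA.
  by apply: ler_wpM2r.
have h2 : (r*D)^+2 <= A^+2 by apply: sqle => //; rewrite mulr_ge0 // ltW.
have h3 : (x*D)^+2 <= (A * L + e*dd*s*D)^+2 by apply: sqle => //; rewrite mulr_ge0 // !ltW.
apply: (le_lt_trans (lerD (ler_wpM2r (sqr_ge0 dd) h2) h3)).
rewrite -subr_gt0.
have E : D^+2 - dd^+2 - L^+2 = 0 by rewrite HD; rring.
have -> : s ^+ 2 * dd ^+ 2 * D ^+ 2 - (A ^+ 2 * dd ^+ 2 + (A * L + e * dd * s * D) ^+ 2)
   = (1+1)*e*(1-e)*(s*dd)^+2*D*(D-L) + (s*dd*(1-e))^+2 * (D^+2 - dd^+2 - L^+2) by rewrite /A; rring.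
rewrite E mulr0 addr0.
by rewrite !mulr_gt0 ?exprn_gt0 ?subr_gt0 ?addr_gt0 ?ltr01.
Qed.

Lemma negp (r dd X x s : R) : X <= x -> x <= 0 ->
  r^+2*dd^+2 + X^+2 < s^+2*dd^+2 -> r^+2*dd^+2 + x^+2 < s^+2*dd^+2.
Proof.
move=> Xx x0; apply: le_lt_trans; rewrite lerD2l -(sqrrN x) -(sqrrN X).
by apply: sqle; rewrite ?oppr_ge0 // lerN2.
Qed.

Lemma conv1 (a b s dd : R) : 0 < dd -> a*dd^+2 + b < s^+2 * dd^+2 -> a + b/dd^+2 < s^+2.
Proof.
move=> d0 h; have dn : dd^+2 != 0 by rewrite expf_neq0 // gt_eqF.
have -> : a + b/dd^+2 = (a*dd^+2 + b)/dd^+2 by rewrite mulrDl mulfK.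
by rewrite ltr_pdivrMr // exprn_gt0.
Qed.

Lemma conv2 (a b s dd : R) : 0 < dd -> a + b/dd^+2 < s^+2 -> a*dd^+2 + b < s^+2 * dd^+2.
Proof.
move=> d0 h; have dn : dd^+2 != 0 by rewrite expf_neq0 // gt_eqF.
move: h; have -> : a + b/dd^+2 = (a*dd^+2 + b)/dd^+2 by rewrite mulrDl mulfK.
by rewrite ltr_pdivrMr // exprn_gt0.
Qed.

End Reals.
Module VecM.
Set Implicit Arguments. Unset Strict Implicit.

Section Vec.
Variable R : rcfType.
Variable d : nat.
Add Ring RR : (RTh R).
Implicit Types u v w : 'rV[R]_d.

Lemma dotE u v : dot u v = \sum_j u 0 j * v 0 j.
Proof. by rewrite /dot !mxE; apply: eq_bigr => j _; rewrite mxE. Qed.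
Lemma dotC u v : dot u v = dot v u.
Proof. by rewrite !dotE; apply: eq_bigr => j _; rewrite mulrC. Qed.
Lemma dotDr u v w : dot u (v + w) = dot u v + dot u w.
Proof. by rewrite !dotE -big_split; apply: eq_bigr => j _; rewrite mxE mulrDr. Qed.
Lemma dotZr u a v : dot u (a *: v) = a * dot u v.
Proof. by rewrite !dotE mulr_sumr; apply: eq_bigr => j _; rewrite mxE mulrCA. Qed.
Lemma dotNr u v : dot u (- v) = - dot u v.
Proof. by rewrite -scaleN1r dotZr mulN1r. Qed.
Lemma dotBr u v w : dot u (v - w) = dot u v - dot u w.
Proof. by rewrite dotDr dotNr. Qed.
Lemma dot0r u : dot u 0 = 0.
Proof. by rewrite -(scale0r 0) dotZr mul0r. Qed.
Lemma dotDl u v w : dot (v + w) u = dot v u + dot w u.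
Proof. by rewrite !(dotC _ u) dotDr. Qed.
Lemma dotZl u a v : dot (a *: v) u = a * dot v u.
Proof. by rewrite !(dotC _ u) dotZr. Qed.
Lemma dotBl u v w : dot (v - w) u = dot v u - dot w u.
Proof. by rewrite !(dotC _ u) dotBr. Qed.
Lemma dot_sumr (I : finType) u (c : I -> R) (q : I -> 'rV[R]_d) :
  dot u (\sum_i c i *: q i) = \sum_i c i * dot u (q i).
Proof.
rewrite (big_morph (dot u) (dotDr u) (dot0r u)).
by apply: eq_bigr => i _; rewrite dotZr.
Qed.
Lemma dot_ge0 v : 0 <= dot v v.
Proof. by rewrite dotE sumr_ge0 // => j _; rewrite -expr2 sqr_ge0. Qed.
Lemma dot_eq0 v : dot v v = 0 -> v = 0.
Proof.
rewrite dotE => h; apply/matrixP => i j; rewrite (ord1 i) mxE.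
have hp : forall j : 'I_d, true -> 0 <= v 0 j * v 0 j by move=> k _; rewrite -expr2 sqr_ge0.
have := psumr_eq0P hp h (i:=j) isT.
by move/eqP; rewrite mulf_eq0 orbb => /eqP.
Qed.
Lemma sqr_norm v : norm v ^+ 2 = dot v v.
Proof. by rewrite /norm sqr_sqrtr // dot_ge0. Qed.
Lemma norm_ge0 v : 0 <= norm v.
Proof. exact: sqrtr_ge0. Qed.
Lemma norm_eq0 v : norm v = 0 -> v = 0.
Proof. by move=> h; apply: dot_eq0; rewrite -sqr_norm h expr0n. Qed.

Lemma cs u v : - dot u v <= norm u * norm v.
Proof.
have [h|h] := eqVneq (norm u * norm v) 0.
  move: h => /eqP; rewrite mulf_eq0 => /orP[] /eqP /norm_eq0 ->.
    by rewrite dotC dot0r oppr0 mulr_ge0 ?norm_ge0.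
  by rewrite dot0r oppr0 mulr_ge0 ?norm_ge0.
have p : 0 < norm u * norm v by rewrite lt_def h mulr_ge0 // norm_ge0.
have := dot_ge0 (norm v *: u + norm u *: v).
rewrite !dotDl !dotDr !dotZl !dotZr -!sqr_norm (dotC v u).
have -> : norm v * (norm v * norm u ^+ 2) + norm v * (norm u * dot u v) +
   (norm u * (norm v * dot u v) + norm u * (norm u * norm v ^+ 2))
   = (1+1) * (norm u * norm v) * (norm u * norm v + dot u v).
  rring.
rewrite pmulr_rge0; last by rewrite mulr_gt0 ?addr_gt0 ?ltr01.
by move=> hh; rewrite -subr_ge0 opprK.
Qed.
Lemma norm_lt_dot v s : 0 < s -> (norm v < s) = (dot v v < s^+2).
Proof. by move=> s0; rewrite /norm -{1}(ger0_norm (ltW s0)) -sqrtr_sqr ltr_sqrt // exprn_gt0. Qed.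
End Vec.

End VecM.
Import VecM.

Lemma sum_const (R : rcfType) (I : finType) (c f : I -> R) a :
  \sum_i c i = 1 -> (forall i, f i = a) -> \sum_i c i * f i = a.
Proof.
move=> c1 hf; rewrite (eq_bigr (fun i => c i * a)) => [|i _]; last by rewrite hf.
by rewrite -mulr_suml c1 mul1r.
Qed.
Lemma sum_const0 (R : rcfType) (I : finType) (c f : I -> R) a :
  \sum_i c i = 0 -> (forall i, f i = a) -> \sum_i c i * f i = 0.
Proof.
move=> c1 hf; rewrite (eq_bigr (fun i => c i * a)) => [|i _]; last by rewrite hf.
by rewrite -mulr_suml c1 mul0r.
Qed.

Section Main.
Variables (R : rcfType) (d k : nat) (p : 'I_k.+1 -> 'rV[R]_d) (tau : 'I_k.+1 -> R) (pbar : 'rV[R]_d).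
Hypothesis k1 : (0 < k)%N.
Hypothesis Hind : aff_indep p.
Hypothesis Hpaff : in_aff (facet p) pbar.
Hypothesis Horth : forall i j, dot (p ord0 - pbar) (facet p i - facet p j) = 0.
Add Ring RR : (RTh R).
Local Notation j0 := (Ordinal k1).
Local Notation n := (p ord0 - pbar).
Local Notation q := (facet p).
Local Notation tq := (facet tau).

Lemma nq j : dot n (q j) = dot n (q j0).
Proof. by apply/eqP; rewrite -subr_eq0 -dotBr Horth. Qed.

Lemma n_aff x : in_aff q x -> dot n x = dot n (q j0).
Proof. by case=> c [c1 ->]; rewrite dot_sumr; apply: sum_const => // j; rewrite nq. Qed.

Lemma n_dir (e : 'I_k -> R) : \sum_j e j = 0 -> dot n (\sum_j e j *: q j) = 0.
Proof. by move=> e0; rewrite dot_sumr; apply: sum_const0 e0 _ => j; rewrite nq. Qed.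

Lemma N_pos : 0 < dot n n.
Proof.
rewrite lt_def dot_ge0 andbT; apply/negP => /eqP /dot_eq0 n0.
case: Hpaff => c [c1 epb].
pose h i := if unlift ord0 i is Some j then - c j else 1.
have := Hind h _ _ ord0; rewrite /h unlift_none => H.
suff : (1 : R) = 0 by move/eqP; rewrite oner_eq0.
apply: H.
  rewrite big_ord_recl unlift_none; under eq_bigr do rewrite liftK.
  by rewrite sumrN c1 subrr.
rewrite big_ord_recl unlift_none; under eq_bigr do rewrite liftK scaleNr.
by rewrite sumrN scale1r -epb.
Qed.

Definition kap (gF : 'rV[R]_d) := dot gF (q j0) - tq j0.

Lemma gpot gF : is_grad q tq gF -> forall j, dot gF (q j) = kap gF + tq j.
Proof.
case=> _ H j; have := H j j0; rewrite dotBr /kap => E.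
apply/eqP; rewrite -subr_eq0; apply/eqP.
have -> : dot gF (q j) - (dot gF (q j0) - tq j0 + tq j) =
   (dot gF (q j) - dot gF (q j0)) - (tq j - tq j0) by rring.
by rewrite E subrr.
Qed.

Lemma gval gF : is_grad q tq gF -> forall c : 'I_k -> R, \sum_j c j = 1 ->
  dot gF (\sum_j c j *: q j) = kap gF + \sum_j c j * tq j.
Proof.
move=> HgF c c1; rewrite dot_sumr.
under eq_bigr do rewrite (gpot _ HgF) mulrDr.
by rewrite big_split /= -mulr_suml c1 mul1r.
Qed.

Lemma gn0 gF : is_grad q tq gF -> dot gF n = 0.
Proof. by case=> [[e [e0 ->]] _]; rewrite dotC n_dir. Qed.

Definition Xv gF := tau ord0 - (dot gF pbar - kap gF).

Lemma construct gF (HgF : is_grad q tq gF) delta :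
  is_grad p (raise0 tau delta) (gF + ((Xv gF + delta) / dot n n) *: n).
Proof.
set a := (Xv gF + delta) / dot n n.
have aN : a * dot n n = Xv gF + delta by rewrite /a divfK // gt_eqF // N_pos.
split.
  case: (HgF) => [[e [e0 eg]] _]; case: Hpaff => c [c1 epb].
  exists (fun i => if unlift ord0 i is Some j then e j - a * c j else a).
  split.
    rewrite big_ord_recl unlift_none; under eq_bigr do rewrite liftK.
    by rewrite sumrB e0 -mulr_sumr c1 mulr1 sub0r subrr.
  rewrite big_ord_recl unlift_none; under eq_bigr do rewrite liftK scalerBl -scalerA.
  by rewrite sumrB -scaler_sumr -epb -eg scalerBr addrCA.
have pot : forall i, dot (gF + a *: n) (p i) - raise0 tau delta i = kap gF + a * dot n (q j0).
  move=> i; case: (unliftP ord0 i) => [j ->|->].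
    rewrite /raise0 eq_sym (negbTE (neq_lift _ _)) dotDl dotZl.
    change (dot gF (q j) + a * dot n (q j) - tq j = kap gF + a * dot n (q j0)).
    by rewrite nq (gpot _ HgF); rring.
  rewrite /raise0 eqxx.
  have -> : dot (gF + a *: n) (p ord0) = dot (gF + a *: n) (n + pbar) by rewrite subrK.
  rewrite dotDl dotZl !(dotDr _ n pbar) (gn0 _ HgF) (n_aff _ Hpaff) mulrDr aN /Xv; rring.
move=> i j; rewrite dotBr; apply/eqP; rewrite -subr_eq0; apply/eqP.
have -> : dot (gF + a *: n) (p i) - dot (gF + a *: n) (p j) - (raise0 tau delta i - raise0 tau delta j)
  = 0 + (dot (gF + a *: n) (p i) - raise0 tau delta i) - (dot (gF + a *: n) (p j) - raise0 tau delta j)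
  by rring.
by rewrite !pot add0r subrr.
Qed.

Lemma dot_construct gF (HgF : is_grad q tq gF) delta :
  dot (gF + ((Xv gF + delta) / dot n n) *: n) (gF + ((Xv gF + delta) / dot n n) *: n)
   = dot gF gF + (Xv gF + delta)^+2 / dot n n.
Proof.
set a := (Xv gF + delta) / dot n n.
have aN : a * dot n n = Xv gF + delta by rewrite /a divfK // gt_eqF // N_pos.
have -> : dot (gF + a *: n) (gF + a *: n) = dot gF gF + a * (a * dot n n).
  rewrite dotDl (dotDr gF gF) dotZl (dotDr n gF) !dotZr (gn0 _ HgF) (dotC n gF) (gn0 _ HgF).
  by rewrite !mulr0 !addr0 add0r.
by rewrite aN /a mulrAC -expr2.
Qed.

Lemma uniq_grad t g1 g2 : is_grad p t g1 -> is_grad p t g2 -> g1 = g2.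
Proof.
case=> [[c1 [s1 e1]] h1] [[c2 [s2 e2]] h2].
pose v := g1 - g2.
have hv : forall i, dot v (p i) = dot v (p ord0).
  by move=> i; apply/eqP; rewrite -subr_eq0 -dotBr /v dotBl h1 h2 subrr.
have Z1 : dot v g1 = 0 by rewrite e1 dot_sumr (@sum_const0 _ _ _ _ _ s1 hv).
have Z2 : dot v g2 = 0 by rewrite e2 dot_sumr (@sum_const0 _ _ _ _ _ s2 hv).
have : dot v v = 0 by rewrite {2}/v dotBr Z1 Z2 subrr.
by move/dot_eq0/eqP; rewrite subr_eq0 => /eqP.
Qed.

Lemma fin g sigma gF (Hg : is_grad p tau g) (Hgs : norm g < sigma) (Hs : 0 < sigma)
  (HgF : is_grad q tq gF) delta : 0 <= delta ->
  (0 < Xv gF + delta -> norm gF ^+ 2 * norm n ^+ 2 + (Xv gF + delta) ^+ 2 < sigma ^+ 2 * norm n ^+ 2) ->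
  exists g', is_grad p (raise0 tau delta) g' /\ norm g' < sigma.
Proof.
move=> d0 Hpos.
exists (gF + ((Xv gF + delta) / dot n n) *: n); split; first exact: construct.
have dd0 : 0 < norm n by rewrite /norm sqrtr_gt0 N_pos.
rewrite norm_lt_dot //.
rewrite (dot_construct _ HgF) -!sqr_norm; apply: conv1 => //.
have [xle|xgt] := leP (Xv gF + delta) 0; last exact: Hpos.
apply: (@negp _ _ _ (Xv gF)) => //; first by rewrite lerDl.
have G : g = gF + ((Xv gF + 0) / dot n n) *: n.
  apply: uniq_grad Hg _.
  have -> : tau = raise0 tau 0.
    by apply: functional_extensionality => i; rewrite /raise0; case: eqP => [->|]; rewrite ?addr0.
  exact: construct.
apply: conv2 => //.
move: Hgs; rewrite norm_lt_dot //.
by rewrite G (dot_construct _ HgF) addr0 -!sqr_norm.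
Qed.


Lemma conv_ge (Hmin : forall i, tau ord0 <= tau i) gF (HgF : is_grad q tq gF) x :
  in_conv q x -> tau ord0 <= dot gF x - kap gF.
Proof.
case=> c [c0 [c1 ->]]; rewrite (gval _ HgF _ c1) addrC addKr.
rewrite -[tau ord0]mul1r -c1 mulr_suml; apply: ler_sum => j _.
by apply: ler_wpM2l; [exact: c0 | exact: Hmin].
Qed.

Lemma part1 (Hmin : forall i, tau ord0 <= tau i) sigma eps g (Hg : is_grad p tau g)
  (Hgs : norm g < sigma) (Hs : 0 < sigma) (e0 : 0 < eps) (e1 : eps < 1) :
  in_conv q pbar ->
  (exists gF, is_grad q tq gF /\ norm gF <= (1 - eps) * sigma) ->
  forall delta, 0 <= delta <= eps * norm n * sigma ->
  exists g', is_grad p (raise0 tau delta) g' /\ norm g' < sigma.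
Proof.
move=> Hc [gF [HgF Hr]] delta /andP[d0 dle].
apply: (fin _ _ _ Hg Hgs Hs HgF delta d0) => xpos.
have dd0 : 0 < norm n by rewrite /norm sqrtr_gt0 N_pos.
have X0 : Xv gF <= 0 by rewrite /Xv subr_le0 (conv_ge Hmin _ HgF _ Hc).
apply: (@pos1 _ _ _ _ eps) => //; first exact: norm_ge0.
apply: le_trans dle; apply: le_trans (lerD X0 (lexx delta)) _; by rewrite add0r.
Qed.

Lemma part2 (Hmin : forall i, tau ord0 <= tau i) sigma eps g (Hg : is_grad p tau g)
  (Hgs : norm g < sigma) (Hs : 0 < sigma) (e0 : 0 < eps) (e1 : eps < 1) :
  ~ in_conv q pbar -> forall u, in_conv q u ->
  (exists gF, is_grad q tq gF /\ norm gF <= (1 - eps) * sigma * sin_angle (p ord0) u pbar) ->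
  forall delta, 0 <= delta <= eps * norm n * sigma ->
  exists g', is_grad p (raise0 tau delta) g' /\ norm g' < sigma.
Proof.
move=> Hnc u Hu [gF [HgF Hr]] delta /andP[d0 dle].
apply: (fin _ _ _ Hg Hgs Hs HgF delta d0) => xpos.
have dd0 : 0 < norm n by rewrite /norm sqrtr_gt0 N_pos.
have Hua : in_aff q u by case: Hu => c [_ [c1 e]]; exists c.
have nm : dot n (pbar - u) = 0 by rewrite dotBr (n_aff _ Hpaff) (n_aff _ Hua) subrr.
have Epu : p ord0 - u = n + (pbar - u) by rewrite addrA subrK.
have L0 : 0 < norm (pbar - u).
  rewrite lt_def norm_ge0 andbT; apply/eqP => /norm_eq0 /eqP; rewrite subr_eq0 => /eqP E.
  by apply: Hnc; rewrite E.
have HD : norm (p ord0 - u) ^+2 = norm n ^+2 + norm (pbar - u) ^+2.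
  rewrite !sqr_norm Epu (dotDl (n + (pbar - u)) n (pbar - u)).
  rewrite (dotDr n n (pbar - u)) (dotDr (pbar - u) n (pbar - u)) nm (dotC (pbar - u) n) nm.
  by rewrite addr0 add0r.
have LD : norm (pbar - u) < norm (p ord0 - u).
  rewrite ltNge; apply/negP => h; have := @sqle _ _ _ (norm_ge0 _) h; rewrite HD gerDr.
  by rewrite leNgt exprn_gt0.
have D0 : 0 < norm (p ord0 - u) by apply: lt_trans LD.
have Hsin : sin_angle (p ord0) u pbar = norm n / norm (p ord0 - u).
  rewrite /sin_angle /cos_angle {1}Epu (dotDl (pbar - u) n (pbar - u)) nm add0r -sqr_norm.
  rewrite (expr2 (norm (pbar - u))) [norm (p ord0 - u) * _]mulrC invfM mulrA mulfK ?gt_eqF //.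
  have D2n0 : norm (p ord0 - u) ^+ 2 != 0 by rewrite gt_eqF // exprn_gt0.
  have E1 : 1 - (norm (pbar - u) / norm (p ord0 - u)) ^+ 2 = (norm n / norm (p ord0 - u)) ^+ 2.
    by rewrite !expr_div_n -{1}(divff D2n0) -mulrBl HD addrK.
  by rewrite E1 sqrtr_sqr ger0_norm // divr_ge0 // norm_ge0.
have HrD : norm gF * norm (p ord0 - u) <= (1 - eps) * sigma * norm n.
  by move: Hr; rewrite Hsin mulrA ler_pdivlMr.
have Xle : Xv gF <= norm gF * norm (pbar - u).
  apply: le_trans (cs gF (pbar - u)); rewrite dotBr opprB /Xv.
  apply: le_trans (lerD (conv_ge Hmin _ HgF _ Hu) (lexx _)) _.
  by rewrite le_eqVlt; apply/orP; left; apply/eqP; rring.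
apply: (@pos2 _ _ _ _ eps _ (norm (pbar - u)) (norm (p ord0 - u))) => //.
- exact: ltW.
- exact: norm_ge0.
- exact: lerD Xle dle.
Qed.

End Main.
Theorem mainTheorem6 (R : rcfType) (d k : nat) (p : 'I_k.+1 -> 'rV[R]_d)
  (tau : 'I_k.+1 -> R) (sigma eps : R) (pbar : 'rV[R]_d) :
  (1 <= k)%N -> (k <= d)%N ->
  aff_indep p ->
  (forall i, tau ord0 <= tau i) ->
  0 < sigma ->
  (exists g, is_grad p tau g /\ norm g < sigma) ->
  0 < eps < 1 ->
  (* pbar = orthogonal projection of p_0 onto aff(F) *)
  in_aff (facet p) pbar ->
  (forall i j, dot (p ord0 - pbar) (facet p i - facet p j) = 0) ->
  (in_conv (facet p) pbar ->
     (exists gF, is_grad (facet p) (facet tau) gF /\ norm gF <= (1 - eps) * sigma) ->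
     forall delta, 0 <= delta <= eps * norm (p ord0 - pbar) * sigma ->
       exists g', is_grad p (raise0 tau delta) g' /\ norm g' < sigma)
  /\
  (~ in_conv (facet p) pbar ->
     forall u, in_conv (facet p) u ->
     (forall x, in_conv (facet p) x -> norm (pbar - u) <= norm (pbar - x)) ->
     (exists gF, is_grad (facet p) (facet tau) gF /\
                 norm gF <= (1 - eps) * sigma * sin_angle (p ord0) u pbar) ->
     forall delta, 0 <= delta <= eps * norm (p ord0 - pbar) * sigma ->
       exists g', is_grad p (raise0 tau delta) g' /\ norm g' < sigma).

Proof.
move=> k1 kd Hind Hmin Hs [g [Hg Hgs]] /andP[e0 e1] Hpaff Horth; split.
- exact: (@part1 _ _ _ _ _ _ k1 Hind Hpaff Horth Hmin _ _ _ Hg Hgs Hs e0 e1).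
- move=> Hnc u Hu _.
  exact: (@part2 _ _ _ _ _ _ k1 Hind Hpaff Horth Hmin _ _ _ Hg Hgs Hs e0 e1 Hnc _ Hu).
Qed.
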